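(* Let $r\ge 2$, let $\lambda,\mu\in\Lambda$ with $\lambda\sim_e\mu$, and let $s\in\mathbb{Z}$. Then $\eta(\lambda,s)\xrightarrow{r}_2\eta(\mu,s)$ (as elements of $\mathcal{A}_r^e$) if and only if $\Phi_r(\lambda,s)\xrightarrow{e}_2\Phi_r(\mu,s)$ (as elements of $\mathcal{A}_e^r$).
   Context: Fix an integer $e\ge 2$. A partition is a weakly decreasing sequence $\lambda=(\lambda_1,\lambda_2,\dots)$ of non-negative integers with finite sum $|\lambda|$; $\Lambda$ denotes the set of partitions and $\Lambda^{(m)}$ the set of $m$-multipartitions, i.e. $m$-tuples $\boldsymbol\lambda=(\lambda^{(1)},\dots,\lambda^{(m)})$ of partitions, with $|\boldsymbol\lambda|=\sum_k|\lambda^{(k)}|$. A $\beta$-set is a subset $B\subseteq\mathbb{Z}$ containing all sufficiently small integers and no sufficiently large ones. For $\lambda\in\Lambda$ and $s\in\mathbb{Z}$ set $B_s(\lambda)=\{\lambda_i-i+s : i\ge 1\}$; every $\beta$-set equals $B_s(\lambda)$ for a unique pair $(\lambda,s)$. For $N\ge 2$ let $\mathcal{A}_N=\Lambda\times\mathbb{Z}$ (abacus configurations with $N$ runners) and $\mathcal{A}_N^m=\Lambda^{(m)}\times\mathbb{Z}^m$, where $(\boldsymbol\lambda,\mathbf{s})$ is identified with the $m$-tuple of $\beta$-sets $(B_{s_1}(\lambda^{(1)}),\dots,B_{s_m}(\lambda^{(m)}))$. The map $\eta$: for $(\lambda,s)\in\mathcal{A}_e$ with $B=B_s(\lambda)$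 and $0\le i<e$, the set $C_i=\{(b-i)/e : b\in B,\ b\equiv i \bmod e\}$ is a $\beta$-set, so $C_i=B_{t_i}(\rho_i)$ for a unique $(\rho_i,t_i)\in\Lambda\times\mathbb{Z}$; set $\eta(\lambda,s)=((\rho_0,\dots,\rho_{e-1}),(t_0,\dots,t_{e-1}))\in\Lambda^{(e)}\times\mathbb{Z}^e$, which we also regard as an element of $\mathcal{A}_r^e$. The $e$-weight of $\lambda$ is $\mathrm{wt}(\lambda)=\sum_i|\rho_i|$. For $\lambda,\mu\in\Lambda$ write $\lambda\sim_e\mu$ if $|\lambda|=|\mu|$, $\mathrm{wt}(\lambda)=\mathrm{wt}(\mu)$ and $\lambda,\mu$ have the same $e$-core (equivalently, $(\lambda,s)$ and $(\mu,s)$ have the same $t$-component under $\eta$ and the same weight, for any $s$). Moves on $\mathcal{A}_N^m$, for $(\boldsymbol\lambda,\mathbf{s}),(\boldsymbol\mu,\mathbf{s})$ with the same $\mathbf{s}$: (1) $(\boldsymbol\lambda,\mathbf{s})\xrightarrow{N}_1(\boldsymbol\mu,\mathbf{s})$ if for some $k_1,k_2\in\{1,\dots,m\}$ the tuple of $\beta$-sets of $(\boldsymbol\mu,\mathbf{s})$ is obtained from that of $(\boldsymbol\lambda,\mathbf{s})$ by replacing an element $b$ of the $k_1$-th $\beta$-set by $b-N$ (not previously in that set) and then replacing an element $c$ of the $k_2$-th $\beta$-set by $c+N$ (not previously in that set). (2) $(\boldsymbol\lambda,\mathbf{s})\xrightarrow{N}_2(\boldsymbol\mu,\mathbf{s})$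 if there exist $k_1,k_2\in\{1,\dots,m\}$, $b_1,b_2\in\mathbb{Z}$ with $b_1\equiv b_2\bmod N$, and $h>0$, such that $b_1\in B_{s_{k_1}}(\lambda^{(k_1)})$, $b_1+h\notin B_{s_{k_1}}(\lambda^{(k_1)})$, $b_2\notin B_{s_{k_2}}(\lambda^{(k_2)})$, $b_2+h\in B_{s_{k_2}}(\lambda^{(k_2)})$, and the $\beta$-sets of $(\boldsymbol\mu,\mathbf{s})$ agree with those of $(\boldsymbol\lambda,\mathbf{s})$ except that $b_1$ is replaced by $b_1+h$ in component $k_1$ and $b_2+h$ is replaced by $b_2$ in component $k_2$. Uglov's map: for $1\le k\le r$ define $\psi_k:\mathbb{Z}\to\mathbb{Z}$ by $\psi_k(ae+i)=((a+1)r-k)e+i$ for $a\in\mathbb{Z}$, $0\le i<e$. For $(\boldsymbol\lambda,\mathbf{s})\in\mathcal{A}_e^r$ the set $B=\bigsqcup_{k=1}^r\psi_k(B_{s_k}(\lambda^{(k)}))$ is a $\beta$-set, and $\Psi_r(\boldsymbol\lambda,\mathbf{s})$ is the unique $(\tilde\lambda,\tilde s)\in\mathcal{A}_e$ with $B_{\tilde s}(\tilde\lambda)=B$. $\Psi_r:\mathcal{A}_e^r\to\mathcal{A}_e$ is a bijection; $\Phi_r=\Psi_r^{-1}$. *)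

(* Defs.v *)
From Stdlib Require Import ClassicalEpsilon.
From mathcomp Require Import all_boot all_algebra.
Set Implicit Arguments. Unset Strict Implicit. Unset Printing Implicit Defensive.
Import GRing.Theory Num.Theory.
Local Open Scope ring_scope.

(* A partition: a finite weakly decreasing sequence of positive integers
   (lambda_i = nth 0 l (i-1), implicitly padded by zeros). *)
Definition is_partition (l : seq nat) : bool :=
  sorted geq l && all (fun x => (0 < x)%N) l.

Definition psize (l : seq nat) : nat := sumn l.

Definition beta (s : int) (l : seq nat) (b : int) : Prop :=
  exists i : nat, b = (nth 0%N l i)%:Z - (i.+1)%:Z + s.

(* An element of A_N^m : (multipartition, charge vector), components indexed by 'I_m
   (component k+1 of the paper is index k). *)
Definition mconf (m : nat) : Type := (('I_m -> seq nat) * ('I_m -> int))%type.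

Definition mbeta (m : nat) (x : mconf m) (k : 'I_m) (b : int) : Prop :=
  beta (x.2 k) (x.1 k) b.

(* The unique (lambda, s) with B_s(lambda) = B (B assumed to be a beta-set). *)
Definition conf_of_beta (B : int -> Prop) : seq nat * int :=
  epsilon (inhabits ([::], 0%:Z))
    (fun p => is_partition p.1 /\ forall b, beta p.2 p.1 b <-> B b).

(* eta(lambda, s) in Lambda^(e) x Z^e : component i is (rho_i, t_i) with
   B_{t_i}(rho_i) = C_i = { (b - i)/e : b in B_s(lambda), b = i mod e }. *)
Definition eta (e : nat) (l : seq nat) (s : int) : mconf e :=
  (fun i : 'I_e => (conf_of_beta (fun c => beta s l (c * e%:Z + (i : nat)%:Z))).1,
   fun i : 'I_e => (conf_of_beta (fun c => beta s l (c * e%:Z + (i : nat)%:Z))).2).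

Definition wt (e : nat) (l : seq nat) : nat :=
  (\sum_(i < e) psize ((eta e l 0).1 i))%N.

(* lambda ~_e mu : same size, same weight, same e-core; the latter expressed
   (as in the paper) by equality of the t-components of eta. *)
Definition sim_e (e : nat) (l m : seq nat) : Prop :=
  psize l = psize m /\ wt e l = wt e m /\
  (forall i : 'I_e, (eta e l 0).2 i = (eta e m 0).2 i).

(* Uglov's psi_k, for the index k : 'I_r standing for k+1 in {1..r}:
   psi_k(a e + i) = ((a+1) r - k) e + i. *)
Definition psi (e r : nat) (k : 'I_r) (c : int) : int :=
  ((((c %/ e%:Z)%Z + 1) * r%:Z - (k.+1 : nat)%:Z) * e%:Z + (c %% e%:Z)%Z).

Definition Psi (e r : nat) (x : mconf r) : seq nat * int :=
  conf_of_beta (fun b => exists (k : 'I_r) (c : int), mbeta x k c /\ b = psi e k c).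

(* Phi_r = Psi_r^{-1} : the (unique) element of A_e^r mapped by Psi_r to (lambda, s). *)
Definition Phi (e r : nat) (l : seq nat) (s : int) : mconf r :=
  epsilon (inhabits ((fun _ => [::]), (fun _ => 0%:Z)) : inhabited (mconf r))
    (fun x => (forall k, is_partition (x.1 k)) /\
       forall b, beta s l b <->
         exists (k : 'I_r) (c : int), mbeta x k c /\ b = psi e k c).

Definition move2 (N m : nat) (x y : mconf m) : Prop :=
  (forall k, x.2 k = y.2 k) /\
  exists (k1 k2 : 'I_m) (b1 b2 : int) (h : int),
    (b1 = b2 %[mod N%:Z])%Z /\ 0 < h /\
    mbeta x k1 b1 /\ ~ mbeta x k1 (b1 + h) /\
    ~ mbeta x k2 b2 /\ mbeta x k2 (b2 + h) /\
    forall (k : 'I_m) (b : int),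
      mbeta y k b <->
      (let step1 := fun b' =>
          if k == k1 then (b' <> b1 /\ mbeta x k b') \/ b' = b1 + h
          else mbeta x k b' in
       if k == k2 then (b <> b2 + h /\ step1 b) \/ b = b2 else step1 b).

(* Main.v *)
Require Import Defs.
From Stdlib Require Import ClassicalEpsilon.
From mathcomp Require Import all_boot all_order all_algebra zify.
Import Order.TTheory GRing.Theory Num.Theory.
Set Implicit Arguments. Unset Strict Implicit. Unset Printing Implicit Defensive.
Local Open Scope ring_scope.

Definition pb (P : int -> Prop) (b : int) : bool :=
  if excluded_middle_informative (P b) then true else false.

Lemma pbP P b : reflect (P b) (pb P b).
Proof. rewrite /pb; case: excluded_middle_informative => H; by constructor. Qed.

Definition win (L : int) (n : nat) : seq int := [seq L + (j%:Z) | j <- iota 0 n].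

Definition gw (P : int -> Prop) L (n : nat) :=
  (forall b, b < L -> P b) /\ (forall b, L + n%:Z <= b -> ~ P b).

Definition wval P L n := L + (count (pb P) (win L n))%:Z.

Definition haschg P t := exists L n, gw P L n /\ t = wval P L n.

Lemma win_down L n : win (L - 1) n.+1 = (L - 1) :: win L n.
Proof.
rewrite /win /= -[1%N]addn0 iotaDl -map_comp; congr (_ :: _); first by rewrite addr0.
apply: eq_map => j /=; lia.
Qed.

Lemma win_up L n : win L n.+1 = rcons (win L n) (L + n%:Z).
Proof. by rewrite /win -addn1 iotaD map_cat cats1 /= add0n. Qed.

Lemma gw_down P L n : gw P L n -> gw P (L - 1) n.+1 /\ wval P (L - 1) n.+1 = wval P L n.
Proof.
move=> [H1 H2]; split; first split.
- move=> b Hb; apply: H1; lia.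
- move=> b Hb; apply: H2; lia.
rewrite /wval win_down /=.
have -> : pb P (L - 1) = true by apply/pbP; apply: H1; lia.
lia.
Qed.

Lemma gw_up P L n : gw P L n -> gw P L n.+1 /\ wval P L n.+1 = wval P L n.
Proof.
move=> [H1 H2]; split; first split.
- exact: H1.
- move=> b Hb; apply: H2; lia.
rewrite /wval win_up -cats1 count_cat /=.
have -> : pb P (L + n%:Z) = false by apply/pbP; apply: H2; lia.
lia.
Qed.

Lemma gw_ext P L n (d m : nat) : gw P L n ->
  gw P (L - d%:Z) (n + d + m) /\ wval P (L - d%:Z) (n + d + m) = wval P L n.
Proof.
move=> H.
have Hd : gw P (L - d%:Z) (n + d) /\ wval P (L - d%:Z) (n + d) = wval P L n.
  elim: d => [|d [IH1 IH2]]; first by rewrite subr0 addn0.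
  have [A1 A2] := gw_down IH1.
  have E : L - (d.+1)%:Z = L - d%:Z - 1 by lia.
  rewrite E addnS; split=> //; by rewrite A2.
case: Hd => Hd1 Hd2.
elim: m => [|m [IH1 IH2]]; first by rewrite addn0.
have [A1 A2] := gw_up IH1.
rewrite addnS; split=> //; by rewrite A2.
Qed.

Lemma gw_to P (L : int) (n : nat) (L' U : int) : gw P L n -> L' <= L -> L + n%:Z <= U ->
  gw P L' `|(U - L')%R|%N /\ wval P L' `|(U - L')%R|%N = wval P L n.
Proof.
move=> H H1 H2.
set d := `|(L - L')%R|%N; set m := `|(U - L - n%:Z)%R|%N.
have E2 : `|(U - L')%R|%N = (n + d + m)%N by rewrite /d /m; lia.
have E1 : L' = L - d%:Z by rewrite /d; lia.
rewrite E2 E1; exact: gw_ext.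
Qed.

Lemma haschg_uniq P t t' : haschg P t -> haschg P t' -> t = t'.
Proof.
move=> [L1 [n1 [G1 ->]]] [L2 [n2 [G2 ->]]].
set L0 := L1 - `|(L1 - L2)%R|%N%:Z.
set U := L1 + n1%:Z + `|(L2 + n2%:Z - L1 - n1%:Z)%R|%N%:Z.
have [_ <-] := gw_to (L' := L0) (U := U) G1 ltac:(rewrite /L0; lia) ltac:(rewrite /U; lia).
have [_ <-] := gw_to (L' := L0) (U := U) G2 ltac:(rewrite /L0; lia) ltac:(rewrite /U; lia).
done.
Qed.

Lemma uniq_win L n : uniq (win L n).
Proof.
rewrite map_inj_uniq ?iota_uniq // => i j H; lia.
Qed.

Lemma mem_win L n a : (a \in win L n) = (L <= a) && (a < L + n%:Z).
Proof.
apply/mapP/idP.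
- move=> [j]; rewrite mem_iota => /andP [_ Hj] ->; apply/andP; split; lia.
- move=> /andP [H1 H2]; exists `|(a - L)%R|%N; last lia.
  rewrite mem_iota; apply/andP; split; lia.
Qed.

Lemma count_ins (s : seq int) (p q : pred int) a : uniq s -> a \in s -> ~~ p a ->
  (forall b, q b = p b || (b == a)) -> count q s = (count p s).+1.
Proof.
elim: s => [|b s IH] //= /andP [Hb Hu]; rewrite inE => Ha Hpa Hq.
case: (eqVneq a b) => [Eab|Nab].
- subst b; rewrite Hq eqxx (negbTE Hpa) /=.
  congr (_ + _)%N; apply: eq_in_count => c Hc; rewrite Hq.
  have -> : (c == a) = false by apply/eqP => E; subst c; rewrite Hc in Hb.
  by rewrite orbF.
- rewrite (negbTE Nab) /= in Ha; rewrite (IH Hu Ha Hpa Hq) Hq.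
  have -> : (b == a) = false by apply/eqP => E; subst b; rewrite eqxx in Nab.
  by rewrite orbF addnS.
Qed.

Lemma haschg_ext P Q t : (forall b, P b <-> Q b) -> haschg P t -> haschg Q t.
Proof.
move=> E [L [n [[G1 G2] ->]]]; exists L, n; split; first split.
- by move=> b Hb; apply/E; apply: G1.
- by move=> b Hb /E; apply: G2.
rewrite /wval; congr (_ + (_ : nat)%:Z); apply: eq_count => b.
by apply/pbP/pbP => /E.
Qed.

Lemma haschg_ins P Q t a : haschg P t -> ~ P a -> (forall b, Q b <-> P b \/ b = a) ->
  haschg Q (t + 1).
Proof.
move=> [L [n [G ->]]] Pa E.
set L0 := L - `|(a - L)%R|%N%:Z.
set U := L + n%:Z + `|(a - L)%R|%N%:Z + 1.
have [[G1 G2] <-] := gw_to (L' := L0) (U := U) G ltac:(rewrite /L0; lia) ltac:(rewrite /U; lia).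
exists L0, `|(U - L0)%R|%N; split; first split.
- by move=> b Hb; apply/E; left; apply: G1.
- move=> b Hb /E [/G2|]; first by apply.
  move=> Eb; subst b; move: Hb; rewrite /L0 /U; lia.
rewrite /wval (count_ins (p := pb P) (q := pb Q) (a := a)).
- lia.
- exact: uniq_win.
- rewrite mem_win; apply/andP; split; rewrite /L0 /U; lia.
- by apply/pbP.
- move=> b; apply/pbP/orP.
  + by move/E => [H|->]; [left; apply/pbP | right].
  + by move=> [/pbP H| /eqP ->]; apply/E; [left|right].
Qed.

Lemma haschg_del P Q t a : haschg P t -> P a -> (forall b, Q b <-> P b /\ b <> a) ->
  haschg Q (t - 1).
Proof.
move=> HP Pa E.
have HP' := HP; move: HP' => [L [n [G Et]]].
have Ha : a < L + n%:Z.
  by rewrite ltNge; apply/negP => H; exact: (G.2 a H Pa).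
set L0 := L - `|(a - L)%R|%N%:Z.
set U := L + n%:Z.
have [[G1 G2] _] := gw_to (L' := L0) (U := U) G ltac:(rewrite /L0; lia) ltac:(rewrite /U; lia).
have HQ : haschg Q (wval Q L0 `|(U - L0)%R|%N).
  exists L0, `|(U - L0)%R|%N; split=> //; split.
  - move=> b Hb; apply/E; split; first by apply: G1.
    move=> Eb; subst b; move: Hb; rewrite /L0; lia.
  - by move=> b Hb /E [/(G2 b Hb)].
have HP2 : haschg P (wval Q L0 `|(U - L0)%R|%N + 1).
  apply: (haschg_ins HQ (a := a)).
  - by move/E => [].
  - move=> b; split.
    + move=> Pb; case: (eqVneq b a) => [->|Nb]; [by right|left; apply/E; split=> //; exact/eqP].
    + by move=> [/E []|->].
have := haschg_uniq HP HP2 => ->.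
by rewrite addrK.
Qed.

Lemma haschg_nil t : haschg (fun b => b < t) t.
Proof.
exists t, 0%N; split; first split.
- done.
- move=> b Hb Hb'; lia.
by rewrite /wval /= addr0.
Qed.

Lemma haschg_gw P L n : gw P L n -> haschg P (wval P L n).
Proof. by move=> G; exists L, n. Qed.

Lemma beta_nil t b : beta t [::] b <-> b < t.
Proof.
split.
- move=> [i ->]; rewrite nth_nil; lia.
- move=> H; exists (`|(t - b)%R|%N).-1; rewrite nth_nil; lia.
Qed.

Lemma beta_cons t x p b : beta t (x :: p) b <-> b = x%:Z - 1 + t \/ beta (t - 1) p b.
Proof.
split.
- move=> [[|i] ->] /=; first by left; lia.
  by right; exists i; lia.
- move=> [->|[i ->]]; first by exists 0%N => /=; lia.
  by exists i.+1 => /=; lia.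
Qed.

Lemma beta_le t p b : sorted geq p -> beta t p b -> b <= (head 0%N p)%:Z - 1 + t.
Proof.
elim: p t => [|x p IH] t /=.
- by move=> _ /beta_nil; lia.
- move=> Hs /beta_cons [->|Hb]; first by lia.
  have Hp := path_sorted Hs.
  have := IH _ Hp Hb.
  have : (head 0%N p <= x)%N by case: p Hs {IH Hb Hp} => [|y q] //= /andP [].
  lia.
Qed.

Lemma is_partition_cons x p : is_partition (x :: p) ->
  [/\ is_partition p, (0 < x)%N & (head 0%N p <= x)%N].
Proof.
rewrite /is_partition /= => /andP [Hs /andP [Hx Ha]].
split=> //; first by rewrite (path_sorted Hs) Ha.
by case: p Hs {Ha} => [|y q] //= /andP [].
Qed.

Lemma haschg_beta t p : is_partition p -> haschg (beta t p) t.
Proof.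
elim: p t => [|x p IH] t.
- move=> _; apply: (haschg_ext (P := fun b => b < t)) (haschg_nil t).
  by move=> b; rewrite beta_nil.
- move=> /is_partition_cons [Hp Hx Hh].
  have H := IH (t - 1) Hp.
  have Hs : sorted geq p by case/andP: Hp.
  have := haschg_ins (a := x%:Z - 1 + t) (Q := beta t (x :: p)) H.
  rewrite subrK; apply.
  + move/(beta_le Hs); lia.
  + by move=> b; rewrite beta_cons; tauto.
Qed.

Lemma haschg_part_aux (c : nat) : forall P L n, gw P L n -> count (pb P) (win L n) = c ->
  exists p, is_partition p /\ forall b, beta (L + c%:Z) p b <-> P b.
Proof.
elim: c => [|c IH] P L n G Hc.
- exists [::]; split=> // b; rewrite beta_nil addr0; split; first exact: G.1.
  move=> Pb; rewrite ltNge; apply/negP => Hb.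
  have Hb2 : b < L + n%:Z by rewrite ltNge; apply/negP => H; exact: (G.2 b H Pb).
  have : has (pb P) (win L n).
    by apply/hasP; exists b; [rewrite mem_win Hb Hb2 | apply/pbP].
  by rewrite has_count Hc.
- have Hex : exists j, (j < n)%N && pb P (L + j%:Z).
    have : has (pb P) (win L n) by rewrite has_count Hc.
    move=> /hasP [b]; rewrite mem_win => /andP [H1 H2] Hb.
    exists `|(b - L)%R|%N; apply/andP; split; first lia.
    by have -> : L + (`|(b - L)%R|%N)%:Z = b by lia.
  have Hub : forall j, (j < n)%N && pb P (L + j%:Z) -> (j <= n)%N.
    by move=> j /andP [H _]; exact: ltnW.
  case: (ex_maxnP Hex Hub) => jm /andP [Hjm HPm] Hmax.
  set M := L + jm%:Z.
  have PM : P M by apply/pbP.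
  have Mmax : forall b, P b -> b <= M.
    move=> b Pb; case: (ltP b L) => Hb; first by rewrite /M; lia.
    have Hb2 : b < L + n%:Z by rewrite ltNge; apply/negP => H; exact: (G.2 b H Pb).
    have := Hmax `|(b - L)%R|%N; rewrite /M.
    have -> : L + (`|(b - L)%R|%N)%:Z = b by lia.
    have -> : (`|(b - L)%R|%N < n)%N by lia.
    move=> /(_ (introT (pbP _ _) Pb)); lia.
  set Q := fun b => P b /\ b <> M.
  have GQ : gw Q L n.
    split.
    + move=> b Hb; split; first exact: G.1.
      by move=> E; move: Hb; rewrite E /M; lia.
    + by move=> b Hb [Qb _]; exact: (G.2 b Hb Qb).
  have HcQ : count (pb Q) (win L n) = c.
    have := count_ins (s := win L n) (p := pb Q) (q := pb P) (a := M) (uniq_win L n).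
    rewrite mem_win Hc => H; apply/eqP; rewrite -eqSS; apply/eqP; symmetry; apply: H.
    + apply/andP; split; rewrite /M; lia.
    + by apply/pbP => [[_]].
    + move=> b; apply/pbP/orP.
      * by case: (eqVneq b M) => [->|Nb] Pb; [right | left; apply/pbP; split=> //; exact/eqP].
      * by move=> [/pbP [] | /eqP ->].
  have [p' [Hp' Eb]] := IH Q L n GQ HcQ.
  have Hhead : (head 0%N p')%:Z - 1 + (L + c%:Z) < M.
    have : Q ((nth 0%N p' 0)%:Z - (0.+1)%:Z + (L + c%:Z)) by apply/Eb; exists 0%N.
    case: p' {Hp' Eb} => [|y q] /= [H1 H2]; have := Mmax _ H1; lia.
  have Htail : forall b, P b <-> b = M \/ Q b.
    move=> b; split; last by move=> [->|[]].
    by case: (eqVneq b M) => [->|Nb] Pb; [left | right; split=> //; exact/eqP].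
  case: (posnP `|(M + 1 - (L + (c.+1)%:Z))%R|%N) => Hx.
  + have Ep : p' = [::].
      case: p' Hp' Eb Hhead => // y q /is_partition_cons [_ Hy _] _ /=; lia.
    subst p'; exists [::]; split=> // b; rewrite beta_nil Htail -Eb beta_nil; lia.
  + exists (`|(M + 1 - (L + (c.+1)%:Z))%R|%N :: p'); split.
    * rewrite /is_partition /= Hx /=.
      case/andP: (Hp') => Hs Ha; rewrite Ha andbT.
      case: p' Hs {Ha Eb Hp'} Hhead => [|y q] //= -> Hh; rewrite andbT; lia.
    * move=> b; rewrite beta_cons Htail -Eb.
      have -> : L + (c.+1)%:Z - 1 = L + c%:Z by lia.
      have -> : (`|(M + 1 - (L + (c.+1)%:Z))%R|%N)%:Z - 1 + (L + (c.+1)%:Z) = M by lia.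
      done.
Qed.

Lemma haschg_part P t : haschg P t -> exists p, is_partition p /\ forall b, beta t p b <-> P b.
Proof. move=> [L [n [G ->]]]; exact: (haschg_part_aux G (erefl _)). Qed.

Lemma conf_of_beta_spec P : (exists t, haschg P t) ->
  is_partition (conf_of_beta P).1 /\
  forall b, beta (conf_of_beta P).2 (conf_of_beta P).1 b <-> P b.
Proof.
move=> [t H]; rewrite /conf_of_beta.
apply: (epsilon_spec _ (fun p : seq nat * int => is_partition p.1 /\ forall b, beta p.2 p.1 b <-> P b)).
have [p Hp] := haschg_part H; by exists (p, t).
Qed.

Lemma haschg_mbeta m (x : mconf m) k : is_partition (x.1 k) -> haschg (mbeta x k) (x.2 k).
Proof. exact: haschg_beta. Qed.

Definition ind (g : int -> int) (x : int) : int :=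
  if excluded_middle_informative (exists a, g a = x) then 1 else 0.

Lemma step_del (g : int -> int) (Q Q' : int -> Prop) x t : injective g ->
  haschg (fun c => Q (g c)) t -> Q x -> (forall b, Q' b <-> Q b /\ b <> x) ->
  haschg (fun c => Q' (g c)) (t - ind g x).
Proof.
move=> Hg H Qx E; rewrite /ind; case: excluded_middle_informative => [[a Ha]|Hn].
- apply: (haschg_del H (a := a)); first by rewrite Ha.
  move=> c; rewrite E; split; move=> [H1 H2]; split=> //.
  + by move=> Ec; apply: H2; rewrite Ec Ha.
  + by move=> Ec; apply: H2; apply: Hg; rewrite Ec Ha.
- rewrite subr0; apply: haschg_ext H => c; rewrite E; split; first by move=> H1; split=> // Ec; apply: Hn; exists c.
  by case.
Qed.

Lemma step_ins (g : int -> int) (Q Q' : int -> Prop) x t : injective g ->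
  haschg (fun c => Q (g c)) t -> ~ Q x -> (forall b, Q' b <-> Q b \/ b = x) ->
  haschg (fun c => Q' (g c)) (t + ind g x).
Proof.
move=> Hg H Qx E; rewrite /ind; case: excluded_middle_informative => [[a Ha]|Hn].
- apply: (haschg_ins H (a := a)); first by rewrite Ha.
  move=> c; rewrite E; split; move=> [H1|H2]; try by left.
  + by right; apply: Hg; rewrite H2 Ha.
  + by right; rewrite H2 Ha.
- rewrite addr0; apply: haschg_ext H => c; rewrite E; split; first by left.
  by case=> // Ec; case: Hn; exists c.
Qed.

Definition S (B : int -> Prop) x1 y1 x2 y2 b :=
  (b <> y2 /\ ((b <> x1 /\ B b) \/ b = y1)) \/ b = x2.

Section Steps.
Variables (g : int -> int) (B : int -> Prop) (x1 y1 x2 y2 : int) (t : int).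
Hypothesis Hg : injective g.
Hypotheses (Bx1 : B x1) (By1 : ~ B y1) (Bx2 : ~ B x2) (By2 : B y2).
Hypothesis HB : haschg (fun c => B (g c)) t.

Let B1 b := B b /\ b <> x1.
Let B2 b := B1 b \/ b = y1.
Let B3 b := B2 b /\ b <> y2.
Let B4 b := B3 b \/ b = x2.

Let H1 : haschg (fun c => B1 (g c)) (t - ind g x1).
Proof. by apply: (step_del Hg HB Bx1). Qed.

Let H2 : haschg (fun c => B2 (g c)) (t - ind g x1 + ind g y1).
Proof. by apply: (step_ins Hg H1) => // [[]]. Qed.

Lemma S_B4 b : S B x1 y1 x2 y2 b <-> B4 b.
Proof. rewrite /S /B4 /B3 /B2 /B1; tauto. Qed.

Lemma chg_S : x1 <> y2 -> y1 <> x2 ->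
  haschg (fun c => S B x1 y1 x2 y2 (g c)) (t - ind g x1 + ind g y1 - ind g y2 + ind g x2).
Proof.
move=> N1 N2.
have H3 : haschg (fun c => B3 (g c)) (t - ind g x1 + ind g y1 - ind g y2).
  apply: (step_del Hg H2) => //; left; split=> // E; exact: N1.
have H4 : haschg (fun c => B4 (g c)) (t - ind g x1 + ind g y1 - ind g y2 + ind g x2).
  apply: (step_ins Hg H3) => //.
  by move=> [[[Bx _]|E] _] //; apply: N2.
by apply: haschg_ext H4 => b; rewrite S_B4.
Qed.

Lemma chg_S_d1 : x1 = y2 -> y1 <> x2 ->
  haschg (fun c => S B x1 y1 x2 y2 (g c)) (t - ind g x1 + ind g y1 + ind g x2).
Proof.
move=> N1 N2.
have H3 : haschg (fun c => B3 (g c)) (t - ind g x1 + ind g y1).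
  apply: haschg_ext H2 => b; split; last by case.
  move=> Hb; split=> // E; move: Hb; rewrite E -N1 /B2 /B1.
  by move=> [[_ //]|E2]; apply: By1; rewrite -E2.
have H4 : haschg (fun c => B4 (g c)) (t - ind g x1 + ind g y1 + ind g x2).
  apply: (step_ins Hg H3) => //.
  by move=> [[[Bx _]|E] _] //; apply: N2.
by apply: haschg_ext H4 => b; rewrite S_B4.
Qed.

Lemma chg_S_d2 : x1 <> y2 -> y1 = x2 ->
  haschg (fun c => S B x1 y1 x2 y2 (g c)) (t - ind g x1 + ind g y1 - ind g y2).
Proof.
move=> N1 N2.
have H3 : haschg (fun c => B3 (g c)) (t - ind g x1 + ind g y1 - ind g y2).
  apply: (step_del Hg H2) => //; left; split=> // E; exact: N1.
apply: haschg_ext H3 => b; rewrite S_B4; split; first by left.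
case=> // ->; rewrite -N2; split; first by right.
by move=> E; apply: By1; rewrite E.
Qed.

End Steps.

Definition Qmv (B B' : int -> Prop) x1 y1 x2 y2 :=
  B x1 /\ ~ B y1 /\ ~ B x2 /\ B y2 /\ x1 <> y2 /\ y1 <> x2 /\ forall b, B' b <-> S B x1 y1 x2 y2 b.

Section Coding.
Variables (N M : nat) (f : 'I_M -> int -> int) (B B' : int -> Prop) (x y : mconf M).
Hypothesis Hinj : forall k k' c c', f k c = f k' c' -> k = k' /\ c = c'.
Hypothesis Hsurj : forall b, exists k c, b = f k c.
Hypothesis Hx : forall k, is_partition (x.1 k) /\ forall c, mbeta x k c <-> B (f k c).
Hypothesis Hy : forall k, is_partition (y.1 k) /\ forall c, mbeta y k c <-> B' (f k c).

Let Hi k c c' : f k c = f k c' <-> c = c'.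
Proof. split; [by move/Hinj => [] | by move->]. Qed.
Let Hd k k' c c' : k != k' -> f k c <> f k' c'.
Proof. by move=> /eqP Nk E; apply: Nk; case: (Hinj E). Qed.
Let Hg k : injective (f k).
Proof. by move=> c c' /Hinj []. Qed.

Let ind_f k k' c : ind (f k) (f k' c) = if k == k' then 1 else 0.
Proof.
rewrite /ind; case: excluded_middle_informative => [[a Ha]|Hn] /=.
  by have [Ek _] := Hinj Ha; rewrite Ek eqxx.
case: eqVneq => // E; case: Hn; exists c; by rewrite E.
Qed.

Let step_iff k1 k2 b1 b2 h k c :
  (let step1 := fun b' =>
          if k == k1 then (b' <> b1 /\ mbeta x k b') \/ b' = b1 + h
          else mbeta x k b' in
       if k == k2 then (c <> b2 + h /\ step1 c) \/ c = b2 else step1 c)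
  <-> S B (f k1 b1) (f k1 (b1 + h)) (f k2 b2) (f k2 (b2 + h)) (f k c).
Proof.
have Xk := (Hx k).2 c.
rewrite /S /=.
case: (eqVneq k k1) => [E1|N1]; case: (eqVneq k k2) => [E2|N2].
- subst k1 k2.
  have := @Hi k c b1; have := @Hi k c (b1 + h); have := @Hi k c b2; have := @Hi k c (b2 + h).
  tauto.
- subst k1.
  have := @Hi k c b1; have := @Hi k c (b1 + h); have := @Hd k _ c b2 N2; have := @Hd k _ c (b2 + h) N2.
  tauto.
- subst k2.
  have := @Hi k c b2; have := @Hi k c (b2 + h); have := @Hd k _ c b1 N1; have := @Hd k _ c (b1 + h) N1.
  tauto.
- have := @Hd k _ c b2 N2; have := @Hd k _ c (b2 + h) N2; have := @Hd k _ c b1 N1; have := @Hd k _ c (b1 + h) N1.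
  tauto.
Qed.

Let chx k : haschg (fun c => B (f k c)) (x.2 k).
Proof. by apply: haschg_ext (haschg_mbeta (Hx k).1) => c; exact: (Hx k).2. Qed.

Let chy k t : haschg (fun c => B' (f k c)) t -> t = y.2 k.
Proof.
move=> H; apply: haschg_uniq (haschg_mbeta (Hy k).1).
by apply: haschg_ext H => c; split => /(Hy k).2.
Qed.

Lemma move2_char : @move2 N M x y <-> exists k1 k2 c1 c2 h, (c1 = c2 %[mod N%:Z])%Z /\ 0 < h /\
  Qmv B B' (f k1 c1) (f k1 (c1 + h)) (f k2 c2) (f k2 (c2 + h)).
Proof.
split.
- move=> [Hch [k1 [k2 [b1 [b2 [h [Hmod [Hh [X1 [X2 [X3 [X4 Hst]]]]]]]]]]]].
  move/((Hx _).2): X1 => X1; move/((Hx _).2): X4 => X4.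
  have {}X2 : ~ B (f k1 (b1 + h)) by move/((Hx _).2).
  have {}X3 : ~ B (f k2 b2) by move/((Hx _).2).
  have HS : forall b, B' b <-> S B (f k1 b1) (f k1 (b1 + h)) (f k2 b2) (f k2 (b2 + h)) b.
    move=> b; have [k [c ->]] := Hsurj b.
    apply: iff_trans (iff_sym ((Hy k).2 c)) _; apply: iff_trans (Hst k c) _; exact: step_iff.
  have HSy k t : haschg (fun c => S B (f k1 b1) (f k1 (b1 + h)) (f k2 b2) (f k2 (b2 + h)) (f k c)) t
      -> t = x.2 k.
    move=> H; rewrite Hch; apply: chy; by apply: haschg_ext H => c; rewrite HS.
  have Nd1 : f k1 b1 <> f k2 (b2 + h).
    move=> E; have [Ek Eb] := Hinj E; subst k2.
    have N2 : f k1 (b1 + h) <> f k1 b2 by move/Hi; lia.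
    have T2 := chg_S_d1 (@Hg k1) X1 X2 X3 (@chx k1) E N2.
    rewrite !ind_f eqxx in T2; have := HSy _ _ T2; lia.
  have Nd2 : f k1 (b1 + h) <> f k2 b2.
    move=> E; have [Ek Eb] := Hinj E; subst k2.
    have N1 : f k1 b1 <> f k1 (b2 + h) by move/Hi; lia.
    have T2 := chg_S_d2 (@Hg k1) X1 X2 X4 (@chx k1) N1 E.
    rewrite !ind_f eqxx in T2; have := HSy _ _ T2; lia.
  by exists k1, k2, b1, b2, h; do 8? split.
- move=> [k1 [k2 [c1 [c2 [h [Hmod [Hh [X1 [X2 [X3 [X4 [N1 [N2 HS]]]]]]]]]]]]].
  split.
  + move=> k; apply: chy.
    have T2 := chg_S (@Hg k) X1 X2 X3 X4 (@chx k) N1 N2.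
    rewrite !ind_f !subrK in T2.
    by apply: haschg_ext T2 => c; rewrite HS.
  + exists k1, k2, c1, c2, h; split=> //; split=> //.
    split; first by apply/((Hx _).2).
    split; first by move/((Hx _).2).
    split; first by move/((Hx _).2).
    split; first by apply/((Hx _).2).
    move=> k c; apply: iff_trans ((Hy k).2 c) _; apply: iff_trans (HS _) _.
    exact: iff_sym (step_iff _ _ _ _ _ _ _).
Qed.

End Coding.

Lemma neq0z (d : int) : 0 < d -> d != 0.
Proof. by move=> H; rewrite gt_eqF. Qed.

Lemma decomp (c d : int) : 0 < d -> exists a j, c = a * d + j /\ 0 <= j < d.
Proof.
move=> Hd; exists (c %/ d)%Z, (c %% d)%Z; split; first exact: divz_eq.
apply/andP; split; [apply: modz_ge0; exact: neq0z | exact: ltz_pmod].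
Qed.

Lemma modz_decomp c d a j : c = a * d + j -> 0 <= j < d -> (c %% d)%Z = j.
Proof. by move=> -> H; rewrite modzMDl modz_small. Qed.

Lemma euclid_uniq (d a j a' j' : int) : 0 < d -> 0 <= j < d -> 0 <= j' < d ->
  a * d + j = a' * d + j' -> a = a' /\ j = j'.
Proof. move=> H1 H2 H3 E; have Ha : a = a' by nia. by split=> //; subst a'; lia. Qed.

Lemma psi_eq (e r : nat) (k : 'I_r) a i : (0 < e)%N -> 0 <= i < e%:Z ->
  @psi e r k (a * e%:Z + i) = (a * r%:Z + (r%:Z - 1 - (k : nat)%:Z)) * e%:Z + i.
Proof.
move=> He Hi; rewrite /psi divzMDl; last by apply: neq0z; lia.
rewrite divz_small; last lia.
rewrite modzMDl modz_small //; nia.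
Qed.

Lemma psi_inj (e r : nat) (k k' : 'I_r) c c' : (0 < e)%N -> (0 < r)%N ->
  @psi e r k c = @psi e r k' c' -> k = k' /\ c = c'.
Proof.
move=> He Hr.
have [a [i [-> Hi]]] := decomp c (ltac:(lia) : 0 < e%:Z).
have [a' [i' [-> Hi']]] := decomp c' (ltac:(lia) : 0 < e%:Z).
rewrite !psi_eq // => E.
have [E1 E2] := euclid_uniq (ltac:(lia) : 0 < e%:Z) Hi Hi' E.
have := ltn_ord k; have := ltn_ord k' => Hk' Hk.
have [E3 E4] := euclid_uniq (ltac:(lia) : 0 < r%:Z)
  (ltac:(lia) : 0 <= r%:Z - 1 - (k : nat)%:Z < r%:Z)
  (ltac:(lia) : 0 <= r%:Z - 1 - (k' : nat)%:Z < r%:Z) E1.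
split; first by apply: val_inj => /=; lia.
by rewrite E3 E2.
Qed.

Lemma psi_surj (e r : nat) b : (0 < e)%N -> (0 < r)%N -> exists (k : 'I_r) c, b = @psi e r k c.
Proof.
move=> He Hr.
have [q [i [Eb Hi]]] := decomp b (ltac:(lia) : 0 < e%:Z).
have [a [j [Eq Hj]]] := decomp q (ltac:(lia) : 0 < r%:Z).
have Hk : (r - 1 - `|j|%N < r)%N by lia.
exists (Ordinal Hk), (a * e%:Z + i); rewrite psi_eq //=.
rewrite Eb Eq; nia.
Qed.

Definition fe (e : nat) (i : 'I_e) (c : int) : int := c * e%:Z + (i : nat)%:Z.

Lemma fe_inj e (k k' : 'I_e) c c' : fe k c = fe k' c' -> k = k' /\ c = c'.
Proof.
rewrite /fe => E.
have := ltn_ord k; have := ltn_ord k' => Hk' Hk.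
have [E1 E2] := euclid_uniq (ltac:(lia) : 0 < e%:Z)
  (ltac:(lia) : 0 <= (k : nat)%:Z < e%:Z) (ltac:(lia) : 0 <= (k' : nat)%:Z < e%:Z) E.
by split=> //; apply: val_inj => /=; lia.
Qed.

Lemma fe_surj (e : nat) b : (0 < e)%N -> exists (k : 'I_e) c, b = fe k c.
Proof.
move=> He.
have [q [i [Eb Hi]]] := decomp b (ltac:(lia) : 0 < e%:Z).
have Hk : (`|i|%N < e)%N by lia.
exists (Ordinal Hk), q; rewrite /fe /=; lia.
Qed.

Lemma comp_isbeta (P : int -> Prop) (g : int -> int) t : haschg P t ->
  (forall L, exists L', forall c, c < L' -> g c < L) ->
  (forall U, exists U', forall c, U' <= c -> U <= g c) ->
  exists t', haschg (fun c => P (g c)) t'.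
Proof.
move=> [L [n [[G1 G2] _]]] H1 H2.
have [L' HL] := H1 L; have [U' HU] := H2 (L + n%:Z).
set L'' := L' - `|(U' - L')%R|%N%:Z.
set N := `|(U' - L'')%R|%N.
exists (wval (fun c => P (g c)) L'' N); exists L'', N; split=> //; split.
- move=> c Hc; apply: G1; apply: HL; rewrite /L'' in Hc; lia.
- move=> c Hc; apply: G2; apply: HU; rewrite /N /L'' in Hc; lia.
Qed.

Lemma fe_bounds (e : nat) (k : 'I_e) : (0 < e)%N ->
  (forall L, exists L', forall c, c < L' -> fe k c < L) /\
  (forall U, exists U', forall c, U' <= c -> U <= fe k c).
Proof.
move=> He; have := ltn_ord k => Hk; split.
- move=> L; exists (- `|L|%N%:Z) => c Hc; rewrite /fe; nia.
- move=> U; exists (`|U|%N%:Z) => c Hc; rewrite /fe; nia.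
Qed.

Lemma psi_bounds (e r : nat) (k : 'I_r) : (0 < e)%N -> (0 < r)%N ->
  (forall L, exists L', forall c, c < L' -> @psi e r k c < L) /\
  (forall U, exists U', forall c, U' <= c -> U <= @psi e r k c).
Proof.
move=> He Hr; have := ltn_ord k => Hk; split.
- move=> L; exists (- `|L|%N%:Z * e%:Z) => c Hc.
  have [a [i [Ec Hi]]] := decomp c (ltac:(lia) : 0 < e%:Z).
  rewrite Ec psi_eq //.
  have Ha : a + 1 <= - `|L|%N%:Z by nia.
  have : (a + 1) * r%:Z * e%:Z <= - `|L|%N%:Z * r%:Z * e%:Z by nia.
  nia.
- move=> U; exists (`|U|%N%:Z * e%:Z) => c Hc.
  have [a [i [Ec Hi]]] := decomp c (ltac:(lia) : 0 < e%:Z).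
  rewrite Ec psi_eq //.
  have Ha : `|U|%N%:Z <= a by nia.
  have Hre : 0 < r%:Z * e%:Z by nia.
  have : `|U|%N%:Z * (r%:Z * e%:Z) <= a * (r%:Z * e%:Z) by nia.
  have : `|U|%N%:Z <= `|U|%N%:Z * (r%:Z * e%:Z) by nia.
  have := ltn_ord k.
  nia.
Qed.

Lemma eta_rep e l s : (0 < e)%N -> is_partition l -> forall k : 'I_e,
  is_partition ((eta e l s).1 k) /\ forall c, mbeta (eta e l s) k c <-> beta s l (fe k c).
Proof.
move=> He Hl k.
have Hex : exists t, haschg (fun c => beta s l (fe k c)) t.
  have [B1 B2] := fe_bounds k He; exact: comp_isbeta (@haschg_beta s l Hl) B1 B2.
have [H1 H2] := conf_of_beta_spec Hex.
split; first exact: H1.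
move=> c; exact: H2 c.
Qed.

Lemma Phi_rep e r l s : (0 < e)%N -> (0 < r)%N -> is_partition l -> forall k : 'I_r,
  is_partition ((Phi e r l s).1 k) /\ forall c, mbeta (Phi e r l s) k c <-> beta s l (@psi e r k c).
Proof.
move=> He Hr Hl.
have Hex k : exists t, haschg (fun c => beta s l (@psi e r k c)) t.
  have [B1 B2] := psi_bounds k He Hr; exact: comp_isbeta (@haschg_beta s l Hl) B1 B2.
pose X0 : mconf r := (fun k => (conf_of_beta (fun c => beta s l (@psi e r k c))).1,
                      fun k => (conf_of_beta (fun c => beta s l (@psi e r k c))).2).
have HX0 k : is_partition (X0.1 k) /\ forall c, mbeta X0 k c <-> beta s l (@psi e r k c).
  exact: conf_of_beta_spec (Hex k).
have HP : (forall k, is_partition ((Phi e r l s).1 k)) /\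
   forall b, beta s l b <-> exists (k : 'I_r) (c : int), mbeta (Phi e r l s) k c /\ b = psi e k c.
  apply: (epsilon_spec (inhabits ((fun _ => [::]), (fun _ => 0%:Z)) : inhabited (mconf r))
    (fun x : mconf r => (forall k, is_partition (x.1 k)) /\
       forall b, beta s l b <-> exists (k : 'I_r) (c : int), mbeta x k c /\ b = psi e k c)).
  exists X0; split; first by move=> k; case: (HX0 k).
  move=> b; split.
  - move=> Bb; have [k [c Eb]] := psi_surj b He Hr; exists k, c; split=> //.
    by apply/(HX0 k).2; rewrite -Eb.
  - by move=> [k [c [Hc ->]]]; apply/(HX0 k).2.
move=> k; split; first exact: HP.1.
move=> c; split.
- by move=> Hc; apply/HP.2; exists k, c.
- move/HP.2 => [k' [c' [Hc' E]]].
  by have [Ek Ec] := psi_inj He Hr E; subst k' c'.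
Qed.

Lemma S_nf B a b c d z : ~ B b -> B d ->
  S B a b c d z <-> (B z /\ z <> a /\ z <> d) \/ z = b \/ z = c.
Proof.
move=> Nb Bd; rewrite /S; split.
- move=> [[Nd [[Na Bz]|Eb]]|Ec]; [by left | by right; left | by right; right].
- move=> [[Bz [Na Nd]]|[Eb|Ec]]; [by left; split=> //; left | | by right].
  left; split; last by right.
  by move=> E; apply: Nb; rewrite -Eb E.
Qed.

Lemma Qmv_R1 B B' a b c d : Qmv B B' a b c d -> Qmv B B' a c b d.
Proof.
move=> [Ba [Nb [Nc [Bd [N1 [N2 HS]]]]]].
do 6? (split; first by auto).
move=> z; rewrite HS !S_nf //; tauto.
Qed.

Lemma Qmv_R2 B B' a b c d : Qmv B B' a b c d -> Qmv B B' d b c a.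
Proof.
move=> [Ba [Nb [Nc [Bd [N1 [N2 HS]]]]]].
do 4? (split; first by auto).
split; first by move=> E; apply: N1.
split; first by [].
move=> z; rewrite HS !S_nf //; tauto.
Qed.

Lemma psi_fe (e r : nat) (k : 'I_r) a I j : (0 < e)%N -> 0 <= I < e%:Z ->
  (k : nat)%:Z = r%:Z - 1 - j -> @psi e r k (a * e%:Z + I) = (a * r%:Z + j) * e%:Z + I.
Proof. move=> He HI Hk; rewrite psi_eq // Hk; nia. Qed.

Lemma ord_of_int (n : nat) (z : int) : 0 <= z < n%:Z -> exists o : 'I_n, (o : nat)%:Z = z.
Proof. move=> H; have Ho : (`|z|%N < n)%N by lia. by exists (Ordinal Ho) => /=; lia. Qed.

Lemma geo1 (e r : nat) (i1 i2 : 'I_e) c1 c2 h : (0 < e)%N -> (0 < r)%N ->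
  (c1 = c2 %[mod r%:Z])%Z -> 0 < h -> fe i1 c1 <> fe i2 c2 ->
  exists (k1 k2 : 'I_r) p1 p2 h', (p1 = p2 %[mod e%:Z])%Z /\ 0 < h' /\
  ((psi e k1 p1 = fe i1 c1 /\ psi e k1 (p1 + h') = fe i2 c2 /\
    psi e k2 p2 = fe i1 (c1 + h) /\ psi e k2 (p2 + h') = fe i2 (c2 + h)) \/
   (psi e k1 p1 = fe i2 (c2 + h) /\ psi e k1 (p1 + h') = fe i1 (c1 + h) /\
    psi e k2 p2 = fe i2 c2 /\ psi e k2 (p2 + h') = fe i1 c1)).
Proof.
move=> He Hr Hmod Hh Nx.
have := ltn_ord i1; have := ltn_ord i2 => Hi2 Hi1.
have HI1 : 0 <= (i1 : nat)%:Z < e%:Z by lia.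
have HI2 : 0 <= (i2 : nat)%:Z < e%:Z by lia.
have [a1 [j [E1 Hj]]] := decomp c1 (ltac:(lia) : 0 < r%:Z).
have [a2 [j2 [E2 Hj2]]] := decomp c2 (ltac:(lia) : 0 < r%:Z).
have Ej : j2 = j.
  by move: Hmod; rewrite (modz_decomp E1 Hj) (modz_decomp E2 Hj2).
subst j2.
have [a1' [j' [E1' Hj']]] := decomp (c1 + h) (ltac:(lia) : 0 < r%:Z).
have E2' : c2 + h = (a1' + (a2 - a1)) * r%:Z + j' by nia.
have [k [Hk]] := ord_of_int (ltac:(lia) : 0 <= r%:Z - 1 - j < r%:Z).
have [k' [Hk']] := ord_of_int (ltac:(lia) : 0 <= r%:Z - 1 - j' < r%:Z).
have P1 := psi_fe a1 He HI1 Hk.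
have P2 := psi_fe a2 He HI2 Hk.
have P1' := psi_fe a1' He HI1 Hk'.
have P2' := psi_fe (a1' + (a2 - a1)) He HI2 Hk'.
rewrite /fe.
case: (ltrgtP 0 ((a2 - a1) * e%:Z + ((i2 : nat)%:Z - (i1 : nat)%:Z))) => Hs.
- exists k, k', (a1 * e%:Z + (i1 : nat)%:Z), (a1' * e%:Z + (i1 : nat)%:Z),
    ((a2 - a1) * e%:Z + ((i2 : nat)%:Z - (i1 : nat)%:Z)).
  split; first by rewrite (modz_decomp (erefl _) HI1) (modz_decomp (erefl _) HI1).
  split=> //; left.
  rewrite (_ : a1 * e%:Z + (i1 : nat)%:Z + _ = a2 * e%:Z + (i2 : nat)%:Z); last by lia.
  rewrite (_ : a1' * e%:Z + (i1 : nat)%:Z + _ = (a1' + (a2 - a1)) * e%:Z + (i2 : nat)%:Z); last by lia.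
  rewrite P1 P2 P1' P2' -E1 -E2 -E1' -E2'; do 3? split; done.
- exists k', k, ((a1' + (a2 - a1)) * e%:Z + (i2 : nat)%:Z), (a2 * e%:Z + (i2 : nat)%:Z),
    (- ((a2 - a1) * e%:Z + ((i2 : nat)%:Z - (i1 : nat)%:Z))).
  split; first by rewrite (modz_decomp (erefl _) HI2) (modz_decomp (erefl _) HI2).
  split; first lia.
  right.
  rewrite (_ : (a1' + (a2 - a1)) * e%:Z + (i2 : nat)%:Z + _ = a1' * e%:Z + (i1 : nat)%:Z); last by lia.
  rewrite (_ : a2 * e%:Z + (i2 : nat)%:Z + _ = a1 * e%:Z + (i1 : nat)%:Z); last by lia.
  rewrite P1 P2 P1' P2' -E1 -E2 -E1' -E2'; do 3? split; done.
- exfalso; apply: Nx; rewrite /fe.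
  have [Ea Ei] := euclid_uniq (ltac:(lia) : 0 < e%:Z) HI1 HI2 (ltac:(lia) :
     a1 * e%:Z + (i1 : nat)%:Z = a2 * e%:Z + (i2 : nat)%:Z).
  by rewrite E1 E2 Ea Ei.
Qed.

Lemma geo2 (e r : nat) (k1 k2 : 'I_r) p1 p2 h : (0 < e)%N -> (0 < r)%N ->
  (p1 = p2 %[mod e%:Z])%Z -> 0 < h -> psi e k1 p1 <> psi e k2 p2 ->
  exists (i1 i2 : 'I_e) c1 c2 h', (c1 = c2 %[mod r%:Z])%Z /\ 0 < h' /\
  ((fe i1 c1 = psi e k1 p1 /\ fe i1 (c1 + h') = psi e k2 p2 /\
    fe i2 c2 = psi e k1 (p1 + h) /\ fe i2 (c2 + h') = psi e k2 (p2 + h)) \/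
   (fe i1 c1 = psi e k2 (p2 + h) /\ fe i1 (c1 + h') = psi e k1 (p1 + h) /\
    fe i2 c2 = psi e k2 p2 /\ fe i2 (c2 + h') = psi e k1 p1)).
Proof.
move=> He Hr Hmod Hh Nx.
have := ltn_ord k1; have := ltn_ord k2 => Hk2 Hk1.
set J1 := r%:Z - 1 - (k1 : nat)%:Z.
set J2 := r%:Z - 1 - (k2 : nat)%:Z.
have HJ1 : (k1 : nat)%:Z = r%:Z - 1 - J1 by rewrite /J1; lia.
have HJ2 : (k2 : nat)%:Z = r%:Z - 1 - J2 by rewrite /J2; lia.
have [a1 [i [E1 Hi]]] := decomp p1 (ltac:(lia) : 0 < e%:Z).
have [a2 [i2 [E2 Hi2]]] := decomp p2 (ltac:(lia) : 0 < e%:Z).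
have Ei : i2 = i.
  by move: Hmod; rewrite (modz_decomp E1 Hi) (modz_decomp E2 Hi2).
subst i2.
have [a1' [i' [E1' Hi']]] := decomp (p1 + h) (ltac:(lia) : 0 < e%:Z).
have E2' : p2 + h = (a1' + (a2 - a1)) * e%:Z + i' by nia.
have [io Hio] := ord_of_int Hi.
have [io' Hio'] := ord_of_int Hi'.
have P1 := psi_fe a1 He Hi HJ1.
have P2 := psi_fe a2 He Hi HJ2.
have P1' := psi_fe a1' He Hi' HJ1.
have P2' := psi_fe (a1' + (a2 - a1)) He Hi' HJ2.
rewrite E1' E2' E1 E2 P1 P2 P1' P2' in Nx *.
case: (ltrgtP 0 ((a2 - a1) * r%:Z + (J2 - J1))) => Hs.
- exists io, io', (a1 * r%:Z + J1), (a1' * r%:Z + J1), ((a2 - a1) * r%:Z + (J2 - J1)).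
  split; first by rewrite !modzMDl.
  split=> //; left; rewrite /fe Hio Hio'.
  do 3? split; nia.
- exists io', io, ((a1' + (a2 - a1)) * r%:Z + J2), (a2 * r%:Z + J2), (- ((a2 - a1) * r%:Z + (J2 - J1))).
  split; first by rewrite !modzMDl.
  split; first lia.
  right; rewrite /fe Hio Hio'.
  do 3? split; nia.
- exfalso; apply: Nx.
  have -> : a2 * r%:Z + J2 = a1 * r%:Z + J1 by lia.
  done.
Qed.

Theorem lemma2p12 (e r : nat) (l m : seq nat) (s : int) :
  (2 <= e)%N -> (2 <= r)%N ->
  is_partition l -> is_partition m -> sim_e e l m ->
  (@move2 r e (eta e l s) (eta e m s) <-> @move2 e r (Phi e r l s) (Phi e r m s)).
Proof.
move=> He2 Hr2 Hl Hm _.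
have He : (0 < e)%N by lia.
have Hr : (0 < r)%N by lia.
have CE := @move2_char r e (@fe e) (beta s l) (beta s m) (eta e l s) (eta e m s)
  (@fe_inj e) (fun b => fe_surj b He) (@eta_rep e l s He Hl) (@eta_rep e m s He Hm).
have CP := @move2_char e r (@psi e r) (beta s l) (beta s m) (Phi e r l s) (Phi e r m s)
  (fun k k' c c' => @psi_inj e r k k' c c' He Hr) (fun b => psi_surj b He Hr)
  (@Phi_rep e r l s He Hr Hl) (@Phi_rep e r m s He Hr Hm).
rewrite CE CP; split.
- move=> [i1 [i2 [c1 [c2 [h [Hmod [Hh HQ]]]]]]].
  have Nx : fe i1 c1 <> fe i2 c2.
    by case: HQ => [Ba [_ [Nb _]]] E; apply: Nb; rewrite -E.
  have [k1 [k2 [p1 [p2 [h' [Hm' [Hh' [[E1 [E2 [E3 E4]]]|[E1 [E2 [E3 E4]]]]]]]]]]] :=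
    geo1 He Hr Hmod Hh Nx.
  + exists k1, k2, p1, p2, h'; split=> //; split=> //.
    rewrite E1 E2 E3 E4; exact: Qmv_R1.
  + exists k1, k2, p1, p2, h'; split=> //; split=> //.
    rewrite E1 E2 E3 E4; exact: Qmv_R2.
- move=> [k1 [k2 [p1 [p2 [h [Hmod [Hh HQ]]]]]]].
  have Nx : psi e k1 p1 <> psi e k2 p2.
    by case: HQ => [Ba [_ [Nb _]]] E; apply: Nb; rewrite -E.
  have [i1 [i2 [c1 [c2 [h' [Hm' [Hh' [[E1 [E2 [E3 E4]]]|[E1 [E2 [E3 E4]]]]]]]]]]] :=
    geo2 He Hr Hmod Hh Nx.
  + exists i1, i2, c1, c2, h'; split=> //; split=> //.
    rewrite E1 E2 E3 E4; exact: Qmv_R1.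
  + exists i1, i2, c1, c2, h'; split=> //; split=> //.
    rewrite E1 E2 E3 E4; exact: Qmv_R2.
Qed.
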